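(* Let $p$ be an odd prime. If $M$ is an $A$-module which is free of finite rank over $\mathbb{Z}_{(p)}$, then $\Phi_nM=0$ for some $n$.
   Context: $A$ is the ring of degree zero stable operations in $p$-local complex $K$-theory (a $\mathbb{Z}_{(p)}$-algebra). Fix $q$ primitive mod $p^2$, $\Psi^q\in A$ the Adams operation, $q_i=q^{(-1)^i\lfloor i/2\rfloor}$, $\Theta_n(X)=\prod_{i=1}^n(X-q_i)$, and $\Phi_n=\Theta_n(\Psi^q)\in A$; every element of $A$ is uniquely a convergent sum $\sum_{n\ge0}a_n\Phi_n$ with $a_n\in\mathbb{Z}_{(p)}$. *)

(* Defs.v *)
From HB Require Import structures.
From mathcomp Require Import all_boot all_order all_algebra.
Set Implicit Arguments. Unset Strict Implicit. Unset Printing Implicit Defensive.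
Import Order.TTheory GRing.Theory Num.Theory.
Local Open Scope ring_scope.

(* Z_(p) as the subring of rat of fractions whose denominator is prime to p. *)
Definition inZpl (p : nat) (x : rat) : bool := ~~ (p %| absz (denq x))%N.

Definition prim_root_mod (q : int) (m : nat) : Prop :=
  forall k : nat, ((m%:Z %| q ^+ k - 1)%Z = (totient m %| k)%N).

Definition qi (q : int) (i : nat) : rat :=
  if odd i then ((q%:~R : rat) ^- (i./2)) else ((q%:~R : rat) ^+ (i./2)).

Definition Theta (q : int) (n : nat) : {poly rat} :=
  \prod_(1 <= i < n.+1) ('X - (qi q i)%:P).

(* Coordinates of a polynomial in the basis (Theta_n)_n (Newton form):
   P = c_0 + (X - q_1)(c_1 + (X - q_2)(c_2 + ...)). *)
Fixpoint newton_coef (q : int) (j k : nat) (P : {poly rat}) : rat :=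
  match k with
  | 0 => P.[qi q j.+1]
  | k'.+1 => newton_coef q j.+1 k'
               ((P - (P.[qi q j.+1])%:P) %/ ('X - (qi q j.+1)%:P))
  end.

Definition theta_coef (q : int) (k : nat) (P : {poly rat}) : rat :=
  newton_coef q 0 k P.

(* The ring A of degree-zero stable operations in p-local K-theory:
   an element is the convergent sum  sum_n a n * Phi_n  with a n in Z_(p);
   we represent it by its coefficient sequence a. *)
Definition opA := nat -> rat.

Definition isA (p : nat) (a : opA) : Prop := forall n, inZpl p (a n).

Definition addA (a b : opA) : opA := fun k => a k + b k.
Definition scaleA (c : rat) (a : opA) : opA := fun k => c * a k.

(* Product: Phi_m Phi_n = (Theta_m Theta_n)(Psi^q), expanded in the Phi basis;
   only terms with m, n <= k contribute to the coefficient of Phi_k. *)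
Definition mulA (q : int) (a b : opA) : opA := fun k =>
  theta_coef q k ((\sum_(m < k.+1) a m *: Theta q m) *
                  (\sum_(n < k.+1) b n *: Theta q n)).

(* Phi_n = Theta_n(Psi^q) is the n-th basis element; Phi_0 = 1. *)
Definition PhiA (n : nat) : opA := fun k => (k == n)%:R.
Definition oneA : opA := PhiA 0.
Definition PsiA : opA := fun k => if (k <= 1)%N then 1 else 0.

(* A structure of A-module on the free Z_(p)-module Z_(p)^r (column vectors),
   given by a ring homomorphism rho : A -> End(Z_(p)^r) = M_r(Z_(p)). *)
Definition isAmodule (p : nat) (q : int) (r : nat) (rho : opA -> 'M[rat]_r) : Prop :=
  [/\ forall a, isA p a -> forall i j, inZpl p (rho a i j),
      forall a b, isA p a -> isA p b -> rho (addA a b) = rho a + rho b,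
      forall c a, inZpl p c -> isA p a -> rho (scaleA c a) = c *: rho a,
      forall a b, isA p a -> isA p b -> rho (mulA q a b) = rho a *m rho b
    & rho oneA = 1%:M].

(* Main.v *)
Require Import Defs.
From HB Require Import structures.
From mathcomp Require Import all_boot all_order all_algebra.
From mathcomp Require Import zify ring.
From Stdlib Require Import FunctionalExtensionality.
Import Order.TTheory GRing.Theory Num.Theory.
Local Open Scope ring_scope.

Section Slender.
Variables (p : nat) (f : opA -> rat) (a : nat -> rat).

Definition PP : rat := (p%:R : rat).

Fixpoint st (N : nat) : nat * rat :=
  match N with
  | 0 => (0%N, 0)
  | N'.+1 => let k := (st N').1 in
             let s' := (st N').2 + PP ^+ k * a N' in
             ((k + N'.+1 * (absz (numq s') + absz (denq s')))%N, s')
  end.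

Definition KK N := (st N).1.
Definition SS N := (st N).2.

Lemma SS_S N : SS N.+1 = SS N + PP ^+ KK N * a N.
Proof. by []. Qed.

Lemma KK_S N : KK N.+1 = (KK N + N.+1 * (absz (numq (SS N.+1)) + absz (denq (SS N.+1))))%N.
Proof. by []. Qed.

Lemma KK_mono N n : (N <= n)%N -> (KK N <= KK n)%N.
Proof.
elim: n => [|n IH]; first by rewrite leqn0 => /eqP->.
rewrite leq_eqVlt => /orP[/eqP->//|]; rewrite ltnS => /IH H.
by rewrite KK_S (leq_trans H) // leq_addr.
Qed.

Lemma KK_bound N : (1 < p)%N -> (N * (absz (numq (SS N)) + absz (denq (SS N))) < p ^ KK N)%N.
Proof.
move=> p1; case: N => [|N]; first by rewrite mul0n expn_gt0; lia.
rewrite KK_S expnD; set h := (_ * _)%N.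
apply: (leq_trans (ltn_expl h p1)).
by rewrite leq_pmull // expn_gt0; lia.
Qed.

End Slender.

Lemma arith (nz ds ns dz : int) (N P : nat) :
  (absz nz + absz dz <= N)%N -> (N * (absz ns + absz ds) < P)%N ->
  (P <= absz (nz * ds - ns * dz)%R)%N -> False.
Proof.
move=> h1 h2 h3.
have h4 : (absz (nz * ds - ns * dz)%R <= absz nz * absz ds + absz ns * absz dz)%N by nia.
have h5 : (absz nz * absz ds <= N * absz ds)%N by apply: leq_mul => //; lia.
have h6 : (absz ns * absz dz <= N * absz ns)%N by rewrite mulnC; apply: leq_mul => //; lia.
lia.
Qed.

Lemma slender (p : nat) (f : opA -> rat) :
  prime p ->
  (forall a, isA p a -> inZpl p (f a)) ->
  (forall a b, isA p a -> isA p b -> f (Defs.addA a b) = f a + f b) ->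
  (forall c a, inZpl p c -> isA p a -> f (Defs.scaleA c a) = c * f a) ->
  exists N0, forall N, (N0 <= N)%N -> f (PhiA N) = 0.
Proof.
move=> pp hZ hadd hsc.
set a := fun n => f (PhiA n).
set K := KK p a; set s := SS p a.
pose y N : opA := fun n => if (N <= n)%N then PP p ^+ (K n - K N) else 0.
have inZnat : forall m : nat, inZpl p m%:R.
  move=> m; rewrite /inZpl; have -> : denq m%:R = 1 := denq_int m.
  by rewrite dvdn1 neq_ltn prime_gt1 ?orbT.
have inZP : forall k, inZpl p (PP p ^+ k).
  by move=> k; rewrite /PP -natrX inZnat.
have yA : forall N, isA p (y N).
  by move=> N n; rewrite /y; case: ifP => _; rewrite ?inZP // (inZnat 0%N).
have PhiAA : forall N, isA p (PhiA N) by move=> N n; rewrite /PhiA inZnat.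
have ystep : forall N, y N = Defs.addA (PhiA N) (Defs.scaleA (PP p ^+ (K N.+1 - K N)) (y N.+1)).
  move=> N; apply: functional_extensionality => n.
  rewrite /y /Defs.addA /Defs.scaleA /PhiA.
  have mN := @KK_mono p a N N.+1 (leqnSn N); rewrite -/K in mN.
  case: (ltngtP n N) => [nN|nN|->].
  - by rewrite ?(ltn_eqF nN) mulr0 addr0.
  - rewrite mulr0n add0r -exprD; congr (_ ^+ _).
    have h2 := @KK_mono p a _ _ nN; rewrite -/K in h2; lia.
  - by rewrite mulr1n subnn expr0 mulr0 addr0.
set z := f (y 0%N).
have K0 : K 0%N = 0%N by [].
have ident : forall N, z = s N + PP p ^+ K N * f (y N).
  elim=> [|N IH]; first by rewrite K0 /s /SS /= expr0 mul1r add0r.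
  rewrite IH {1}ystep hadd ?yA //; last first.
    move=> n; rewrite /Defs.scaleA /y; case: ifP => _; last by rewrite mulr0 (inZnat 0%N).
    by rewrite -exprD inZP.
  rewrite (hsc _ (y N.+1)) ?inZP ?yA // /s SS_S -/s -/K.
  rewrite mulrDr addrA mulrA -exprD subnKC //.
  by apply: (@KK_mono p a).
have eqz : forall N, (absz (numq z) + absz (denq z) <= N)%N -> z = s N.
  move=> N hN; apply/eqP; apply: contraT => hne.
  set u := f (y N).
  have hu : inZpl p u by apply: hZ.
  have hw : z - s N = PP p ^+ K N * u by rewrite (ident N) addrC addKr.
  set nz := numq z; set dz := denq z; set ns := numq (s N); set ds := denq (s N).
  set nu := numq u; set du := denq u.
  set m : int := nz * ds - ns * dz.
  have dz0 : dz != 0 by apply: denq_neq0.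
  have ds0 : ds != 0 by apply: denq_neq0.
  have du0 : du != 0 by apply: denq_neq0.
  have F1 : (z - s N) * (dz * ds)%:~R = m%:~R.
    rewrite /m !intrD !intrN !intrM /nz /ns !numqE -/dz -/ds.
    by rewrite mulrBl !mulrA [s N * _ * _]mulrAC.
  have F2 : m * du = (p ^ K N)%N%:Z * (nu * dz * ds).
    apply: (@intr_inj rat); rewrite intrM -F1 hw.
    rewrite !intrM /nu numqE -/du.
    have -> : ((p ^ K N)%N%:Z)%:~R = PP p ^+ K N :> rat by rewrite /PP -natrX.
    have H : forall c1 c2 c3 c4 c5 : rat, c1*c2*(c4*c5)*c3 = c1*(c2*c3*c4*c5).
      by move=> *; ring.
    by apply: H.
  have m0 : m != 0.
    apply: contra hne => /eqP m0; rewrite -subr_eq0.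
    move: F1; rewrite m0 mulr0z => /eqP; rewrite mulf_eq0 => /orP[//|].
    by rewrite intr_eq0 mulf_eq0 (negbTE dz0) (negbTE ds0).
  have F3 : (p ^ K N %| absz m * absz du)%N.
    by rewrite -abszM F2 abszM; apply: dvdn_mulr; rewrite absz_nat.
  have cop : coprime (p ^ K N) (absz du).
    by apply: coprimeXl; rewrite prime_coprime.
  rewrite (Gauss_dvdl _ cop) in F3.
  have F4 : (p ^ K N <= absz m)%N by apply: dvdn_leq F3; rewrite absz_gt0.
  have F6 := @KK_bound p a N (prime_gt1 pp).
  rewrite -/K -/s -/ns -/ds in F6.
  exfalso; apply: (@arith nz ds ns dz N (p ^ K N)%N) => //.
exists (absz (numq z) + absz (denq z))%N => N hN.
have e1 := eqz N hN.
have e2 := eqz N.+1 (leq_trans hN (leqnSn N)).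
have : PP p ^+ K N * a N = 0.
  by move: e2; rewrite /s SS_S -/s -e1 -{1}(addr0 z) => /addrI <-.
move/eqP; rewrite mulf_eq0 expf_eq0 /PP pnatr_eq0 => /orP[/andP[_ /eqP p0]|/eqP //].
by move: pp; rewrite p0.
Qed.

Theorem proposition3p6 (p : nat) (q : int) (r : nat) (rho : opA -> 'M[rat]_r) :
  prime p -> odd p -> prim_root_mod q (p ^ 2) ->
  isAmodule p q rho ->
  exists n : nat, rho (PhiA n) = 0.
Proof.
move=> pp _ _ [h1 h2 h3 h4 h5].
have H : forall ij : 'I_r * 'I_r, exists N0, forall N, (N0 <= N)%N -> rho (PhiA N) ij.1 ij.2 = 0.
  move=> [i j] /=.
  apply: (@slender p (fun a => rho a i j) pp).
  - by move=> a ha; apply: h1.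
  - by move=> a b ha hb /=; rewrite h2 // mxE.
  - by move=> c a hc ha /=; rewrite h3 // mxE.
have G : forall s : seq ('I_r * 'I_r), exists N0, forall ij, ij \in s ->
    forall N, (N0 <= N)%N -> rho (PhiA N) ij.1 ij.2 = 0.
  elim=> [|ij s [N1 IH]]; first by exists 0%N.
  have [N2 H2] := H ij.
  exists (maxn N1 N2) => kl; rewrite inE => /orP[/eqP->|kls] N; rewrite geq_max => /andP[hN1 hN2].
  - exact: H2.
  - exact: IH.
have [N0 HN] := G (enum [set: 'I_r * 'I_r]).
exists N0; apply/matrixP => i j; rewrite mxE.
by apply: (HN (i, j)); rewrite ?mem_enum ?in_setT.
Qed.
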